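(* Given a mixture of Bayesian network distributions that are Markovian in $\mathcal{G}$, if $X \perp \!\!\! \perp^{\mathcal{G}}_d Y \mid \vec{C}$, then for all assignments $\vec{c}$ to $\vec{C}$, $\operatorname{rk}_+(\mathbf{M}[X, Y \mid \vec c]) \leq k$.
   Context: $\mathcal{G} = (\vec{V}, \vec{E})$ is a DAG on observed discrete variables; a latent discrete variable $U \in \{1,\ldots,k\}$ is a parent of every observed variable (the augmented DAG is $\mathcal{G}'$), so the observed distribution is a $k$-mixture (over values $u$ of $U$) of distributions $\Pr(\vec V \mid u)$, each Markovian in $\mathcal{G}$. $X, Y \in \vec V$, $\vec C \subseteq \vec V$. For discrete $X,Y$ with $m$ values, the probability matrix $\mathbf{M}[X, Y \mid \vec{c}] \in [0,1]^{m\times m}$ has entries $\mathbf{M}[X, Y \mid \vec{c}]_{x,y} := \Pr(x, y \mid \vec{c})$. $\operatorname{rk}_+$ denotes nonnegative rank. $\perp \!\!\! \perp^{\mathcal{G}}_d$ denotes d-separation in $\mathcal{G}$. *)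

(* Defs.v *)
From HB Require Import structures.
From mathcomp Require Import all_boot all_order all_algebra.
From Stdlib Require Import ClassicalEpsilon.
Set Implicit Arguments. Unset Strict Implicit. Unset Printing Implicit Defensive.
Import Order.TTheory GRing.Theory Num.Theory.
Local Open Scope ring_scope.

(* The DAG G is given by its edge
   relation E (E i j means an edge i -> j). *)

Definition assignment (n : nat) (V : 'I_n -> finType) := {dffun forall i : 'I_n, V i}.

Definition acyclic (n : nat) (E : rel 'I_n) : Prop :=
  forall i j, E i j -> ~~ connect E j i.

Definition adj (n : nat) (E : rel 'I_n) : rel 'I_n := fun a b => E a b || E b a.

Definition collider (n : nat) (E : rel 'I_n) (a b c : 'I_n) : bool := E a b && E c b.

(* x :: p is an active (simple) trail from x to y given C: consecutive nodes
   are adjacent, no node is repeated, and every interior node b (with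
   neighbours a, c on the trail) is either a collider having itself or a
   descendant in C, or a non-collider not in C. *)
Definition active_trail (n : nat) (E : rel 'I_n) (C : {set 'I_n})
    (x y : 'I_n) (p : seq 'I_n) : Prop :=
  [/\ path (adj E) x p, last x p = y, uniq (x :: p) &
      forall i : nat, (0 < i < size p)%N ->
        let a := nth x (x :: p) i.-1 in
        let b := nth x (x :: p) i in
        let c := nth x (x :: p) i.+1 in
        if collider E a b c then exists2 d, connect E b d & d \in C
        else b \notin C].

Definition dsep (n : nat) (E : rel 'I_n) (X Y : 'I_n) (C : {set 'I_n}) : Prop :=
  forall p : seq 'I_n, ~ active_trail E C X Y p.

Definition markovian (R : realFieldType) (n : nat) (E : rel 'I_n)
    (V : 'I_n -> finType) (P : assignment V -> R) : Prop :=
  exists cpt : forall i : 'I_n, assignment V -> V i -> R,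
    [/\ forall i v x, 0 <= cpt i v x,
        forall i v, \sum_(x : V i) cpt i v x = 1,
        forall i (v w : assignment V),
          (forall j, E j i -> v j = w j) -> forall x, cpt i v x = cpt i w x &
        forall v, P v = \prod_(i < n) cpt i v (v i)].

(* P is the observed distribution of a latent U in {1..k} (here 'I_k) that is
   a parent of every observed variable: a k-mixture of distributions each
   Markovian in G. *)
Definition mixture_BN (R : realFieldType) (n : nat) (E : rel 'I_n)
    (V : 'I_n -> finType) (k : nat) (P : assignment V -> R) : Prop :=
  exists (w : 'I_k -> R) (Pu : 'I_k -> assignment V -> R),
    [/\ forall u, 0 <= w u,
        \sum_(u < k) w u = 1,
        forall u, markovian E (Pu u) &
        forall v, P v = \sum_(u < k) w u * Pu u v].

Definition prob_event (R : realFieldType) (n : nat) (V : 'I_n -> finType)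
    (P : assignment V -> R) (A : pred (assignment V)) : R :=
  \sum_(v : assignment V | A v) P v.

(* the event C = c, where the assignment c to C is given as the restriction
   to C of a full assignment cv *)
Definition cond_event (n : nat) (V : 'I_n -> finType) (C : {set 'I_n})
    (cv : assignment V) : pred (assignment V) :=
  fun v => [forall j in C, v j == cv j].

(* M[X, Y | c]_{x,y} = Pr(x, y | c)  (division by 0 gives 0 in MathComp) *)
Definition prob_matrix (R : realFieldType) (n : nat) (V : 'I_n -> finType)
    (P : assignment V -> R) (X Y : 'I_n) (C : {set 'I_n}) (cv : assignment V)
    : V X -> V Y -> R :=
  fun x y =>
    prob_event P (fun v => [&& v X == x, v Y == y & cond_event C cv v])
    / prob_event P (cond_event C cv).

Definition nn_factorization (R : realFieldType) (A B : finType)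
    (M : A -> B -> R) (r : nat) : Prop :=
  exists (W : A -> 'I_r -> R) (H : 'I_r -> B -> R),
    [/\ forall a l, 0 <= W a l,
        forall l b, 0 <= H l b &
        forall a b, M a b = \sum_(l < r) W a l * H l b].

(* rk_+(M) = least r such that M has a nonnegative factorization with inner
   dimension r (well defined for entrywise nonnegative M). *)
Definition nnrank (R : realFieldType) (A B : finType) (M : A -> B -> R) : nat :=
  epsilon (inhabits 0%N)
    (fun r => nn_factorization M r /\
              forall r', nn_factorization M r' -> (r <= r')%N).

Arguments prob_matrix {R n V} P X Y C cv.
Arguments nnrank {R A B} M.
Arguments dsep {n} E X Y C.
Arguments mixture_BN {R n} E {V} k P.
Arguments markovian {R n} E {V} P.
Arguments acyclic {n} E.

(* Main.v *)
Require Import Defs.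
From HB Require Import structures.
From mathcomp Require Import all_boot all_order all_algebra.
From mathcomp Require Import zify.
From Stdlib Require Import ClassicalEpsilon.
Set Implicit Arguments. Unset Strict Implicit. Unset Printing Implicit Defensive.
Import Order.TTheory GRing.Theory Num.Theory.
Section Graph.
Variables (n : nat) (E : rel 'I_n) (C : {set 'I_n}) (X Y : 'I_n).
Hypothesis acy : acyclic E.

Definition anc b := [exists d, connect E b d && (d \in C)].
Definition ok3 a b c := if collider E a b c then anc b else b \notin C.
Definition walk (s : seq 'I_n) t :=
  [/\ (0 < size s)%N, nth X s 0 = X, nth X s (size s).-1 = t,
      (forall i, i.+1 < size s -> adj E (nth X s i) (nth X s i.+1)) &
      (forall i, i.+2 < size s -> ok3 (nth X s i) (nth X s i.+1) (nth X s i.+2))].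

Lemma noback a b : E a b -> ~~ E b a.
Proof. move=> ab; apply/negP=> ba; have:= acy ab; by rewrite (connect1 ba). Qed.

Lemma noloop a : ~~ E a a.
Proof. apply/negP=> aa; by have:= acy aa; rewrite connect0. Qed.

Lemma anc_conn a b : connect E a b -> anc b -> anc a.
Proof.
move=> ab /existsP[d /andP[bd dC]]; apply/existsP; exists d.
by rewrite (connect_trans ab bd) dC.
Qed.

Lemma anc_notC a : ~~ anc a -> a \notin C.
Proof.
move=> h; apply/negP=> aC; move/negP: h; apply; apply/existsP; exists a.
by rewrite connect0 aC.
Qed.

Lemma ok3_out p a b : E a p -> a \notin C -> ok3 p a b.
Proof. by move=> h aC; rewrite /ok3 /collider (negbTE (noback h)). Qed.

Lemma ok3_out2 p a b : E a b -> a \notin C -> ok3 p a b.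
Proof. by move=> h aC; rewrite /ok3 /collider (negbTE (noback h)) andbF. Qed.

Lemma walk1 : walk [:: X] X.
Proof. by split => // i. Qed.

Lemma walk_rcons s a b : walk s a -> adj E a b ->
  (size s <= 1)%N \/ ok3 (nth X s (size s).-2) a b -> walk (rcons s b) b.
Proof.
case=> s0 h0 hl hadj hok hab hlast; split.
- by rewrite size_rcons.
- by rewrite nth_rcons s0 h0.
- by rewrite size_rcons /= nth_rcons ltnn eqxx.
- move=> i; rewrite size_rcons ltnS => hi; rewrite !nth_rcons.
  case: (ltnP i.+1 (size s)) => h.
    by rewrite (ltnW h); exact: hadj.
  have e : i.+1 = size s by lia.
  rewrite e eqxx leqnn.
  have -> : nth X s i = a by rewrite -hl -e.
  exact: hab.
- move=> i; rewrite size_rcons ltnS => hi; rewrite !nth_rcons.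
  case: (ltnP i.+2 (size s)) => h.
    by rewrite (ltnW h) (ltnW (ltnW h)); exact: hok.
  have e : i.+2 = size s by lia.
  rewrite e eqxx leqnn (_ : i < size s); last lia.
  have -> : nth X s i.+1 = a by rewrite -hl -e.
  case: hlast => [hs|]; first by lia.
  by rewrite -e.
Qed.

Lemma walk_app s a q : walk s a -> ~~ anc a -> path E a q -> walk (s ++ q) (last a q).
Proof.
elim: q s a => [|b q IH] s a ws na /=; first by rewrite cats0.
move/andP=> [ab pq]; rewrite -cat_rcons; apply: IH => //.
- apply: walk_rcons ws _ _; first by rewrite /adj ab.
  by right; exact: ok3_out2 ab (anc_notC na).
- exact: contra (anc_conn (connect1 ab)) na.
Qed.

Lemma walk_rev q a : path E a q -> last a q = X -> ~~ anc a ->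
  exists s, walk s a /\ ((size s <= 1)%N \/ E a (nth X s (size s).-2)).
Proof.
elim: q a => [|b q IH] a /=.
  by move=> _ -> _; exists [:: X]; split; [exact: walk1 | left].
move/andP=> [ab pq] lq na.
have nb : ~~ anc b := contra (anc_conn (connect1 ab)) na.
case: (IH b pq lq nb) => s [ws hs]; exists (rcons s a); split.
- apply: walk_rcons ws _ _; first by rewrite /adj ab orbT.
  case: hs => [hs|hs]; [by left | right].
  by rewrite /ok3 /collider (negbTE (noback hs)) /=; exact: anc_notC nb.
- right; case: ws => s0 _ hl _ _.
  rewrite size_rcons /= nth_rcons (_ : (size s).-1 < size s); last lia.
  by rewrite hl.
Qed.

Definition inA a := [exists j, ((j == X) || (j == Y) || (j \in C)) && connect E a j].

Lemma inA_par a b : connect E a b -> inA b -> inA a.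
Proof.
move=> ab /existsP[j /andP[hj bj]]; apply/existsP; exists j.
by rewrite hj (connect_trans ab bj).
Qed.

Lemma step_direct s a b : walk s a -> a \notin C -> inA a -> b \notin C -> adj E a b ->
  (exists s', walk s' b) \/ (exists s', walk s' Y).
Proof.
move=> ws aC hA bC hab.
case hok: ((size s <= 1)%N || ok3 (nth X s (size s).-2) a b).
  left; exists (rcons s b); apply: walk_rcons ws hab _.
  by case/orP: hok; [left | right].
move/norP: hok => [hs hnok].
have na : ~~ anc a.
  move: hnok; rewrite /ok3; case: (collider E _ _ _) => //.
  by rewrite aC.
case/existsP: hA => j /andP[hj /connectP[q pq lq]].
case/orP: hj => [/orP[] /eqP hj | hj]; rewrite ?hj in lq.
- case: (walk_rev pq (esym lq) na) => s' [ws' hs'].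
  left; exists (rcons s' b); apply: walk_rcons ws' hab _.
  by case: hs' => [h|h]; [left | right; exact: ok3_out].
- right; exists (s ++ q); rewrite lq; exact: walk_app.
- case/negP: na; apply/existsP; exists j; rewrite hj andbT lq.
  by apply/connectP; exists q.
Qed.


Lemma step_co s a b d : walk s a -> a \notin C -> b \notin C -> E a d -> E b d -> inA d ->
  (exists s', walk s' b) \/ (exists s', walk s' Y).
Proof.
move=> ws aC bC ad bd hA.
have ws2 : walk (rcons s d) d.
  apply: walk_rcons ws _ _; first by rewrite /adj ad.
  by right; exact: ok3_out2 ad aC.
case: (boolP (anc d)) => hd.
  left; exists (rcons (rcons s d) b); apply: walk_rcons ws2 _ _.
    by rewrite /adj bd orbT.
  right; case: ws => s0 _ hl _ _.
  rewrite size_rcons /= nth_rcons (_ : (size s).-1 < size s); last lia.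
  by rewrite hl /ok3 /collider ad bd.
case/existsP: hA => j /andP[hj /connectP[q pq lq]].
case/orP: hj => [/orP[] /eqP hj | hj]; rewrite ?hj in lq.
- case: (walk_rev pq (esym lq) hd) => s' [ws' hs'].
  left; exists (rcons s' b); apply: walk_rcons ws' _ _; first by rewrite /adj bd orbT.
  by case: hs' => [h|h]; [left | right; exact: ok3_out h (anc_notC hd)].
- right; exists (rcons s d ++ q); rewrite lq; exact: walk_app.
- case/negP: hd; apply/existsP; exists j; rewrite hj andbT lq.
  by apply/connectP; exists q.
Qed.

Section Seq.
Variable s : seq 'I_n.
Hypothesis hadj : forall i, i.+1 < size s -> adj E (nth X s i) (nth X s i.+1).
Hypothesis hok : forall i, i.+2 < size s -> ok3 (nth X s i) (nth X s i.+1) (nth X s i.+2).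

Lemma seg k i : i.+2 + k < size s -> E (nth X s i) (nth X s i.+1) ->
  E (nth X s (i + k).+2) (nth X s (i + k).+1) -> anc (nth X s i).
Proof.
elim: k i => [|k IH] i hi h1 h2.
  have := hok (i := i) ltac:(lia); rewrite /ok3 /collider h1 /=.
  rewrite addn0 in h2; rewrite h2 => ha; exact: anc_conn (connect1 h1) ha.
have := hadj (i := i.+1) ltac:(lia); rewrite /adj; case/orP => h3.
  apply: anc_conn (connect1 h1) _; apply: IH => //; first lia.
  by rewrite (_ : i.+1 + k = i + k.+1); last lia.
have := hok (i := i) ltac:(lia); rewrite /ok3 /collider h1 h3 /= => ha.
exact: anc_conn (connect1 h1) ha.
Qed.

Lemma cut_ok i j : i.+1 < j -> j.+1 < size s -> nth X s i.+1 = nth X s j ->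
  ok3 (nth X s i) (nth X s i.+1) (nth X s j.+1).
Proof.
move=> hij hj he.
have hi := hok (i := i) ltac:(lia).
have hj' := hok (i := j.-1) ltac:(lia).
rewrite (_ : j.-1.+1 = j) in hj'; last lia.
rewrite /ok3; case hc: (collider E _ _ _).
  move: hc => /andP[h1 h2].
  move: hi; rewrite /ok3 /collider h1 /=.
  case e1: (E (nth X s i.+2) (nth X s i.+1)) => // hiC.
  have f1 : E (nth X s i.+1) (nth X s i.+2).
    have := hadj (i := i.+1) ltac:(lia); by rewrite /adj e1 orbF.
  move: hj'; rewrite /ok3 /collider -he h2 andbT.
  case e2: (E (nth X s j.-1) (nth X s i.+1)) => // hjC.
  have b2 : E (nth X s j) (nth X s j.-1).
    have := hadj (i := j.-1) ltac:(lia).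
    by rewrite (_ : j.-1.+1 = j); [rewrite /adj -he e2 /= | lia].
  case: (ltngtP j i.+2) => hji; first lia.
    pose k := j - i.+3.
    apply: (@seg k i.+1); first lia.
      exact: f1.
    rewrite (_ : (i.+1 + k).+2 = j); last lia.
    by rewrite (_ : (i.+1 + k).+1 = j.-1); last lia.
  by move: f1; rewrite -hji -he (negbTE (noloop _)).
move/negbT: hc; rewrite /collider negb_and => /orP[] hn.
  by move: hi; rewrite /ok3 /collider (negbTE hn).
move: hj'; rewrite /ok3 /collider -he (negbTE hn) andbF; exact.
Qed.
End Seq.


Lemma nth_cut_le (s : seq 'I_n) i j k : i < j -> j < size s -> k <= i ->
  nth X (take i.+1 s ++ drop j.+1 s) k = nth X s k.
Proof.
move=> hij hj hk; rewrite nth_cat size_take (_ : i.+1 < size s); last lia.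
by rewrite (_ : k < i.+1) // nth_take.
Qed.

Lemma nth_cut_gt (s : seq 'I_n) i j k : i < j -> j < size s -> i < k ->
  nth X (take i.+1 s ++ drop j.+1 s) k = nth X s (k + (j - i)).
Proof.
move=> hij hj hk; rewrite nth_cat size_take (_ : i.+1 < size s); last lia.
rewrite (_ : k < i.+1 = false); last lia.
by rewrite nth_drop; congr nth; lia.
Qed.

Lemma cut_walk s t i j : walk s t -> i < j -> j < size s -> nth X s i = nth X s j ->
  walk (take i.+1 s ++ drop j.+1 s) t.
Proof.
case=> s0 h0 hl hadj hok hij hj he.
have hsz : size (take i.+1 s ++ drop j.+1 s) = i.+1 + (size s - j.+1).
  by rewrite size_cat size_take size_drop (_ : i.+1 < size s); last lia.
have Le := nth_cut_le hij hj; have Gt := nth_cut_gt hij hj.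
split.
- by rewrite hsz.
- by rewrite Le.
- rewrite hsz; case: (ltnP i (i.+1 + (size s - j.+1)).-1) => h.
    by rewrite Gt // -hl; congr nth; lia.
  rewrite Le // (_ : (i.+1 + (size s - j.+1)).-1 = i); last lia.
  by rewrite he -hl; congr nth; lia.
- move=> k; rewrite hsz => hk.
  case: (ltngtP k i) => h.
  + by rewrite !Le //; [apply: hadj; lia | lia].
  + rewrite !Gt //; last lia.
    rewrite (_ : (k.+1 + (j - i)) = (k + (j - i)).+1); last lia.
    by apply: hadj; lia.
  + subst k; rewrite Le // Gt // he (_ : i.+1 + (j - i) = j.+1); last lia.
    by apply: hadj; lia.
- move=> k; rewrite hsz => hk.
  case: (ltngtP k.+1 i) => h.
  + by rewrite !Le //; [apply: hok; lia | lia | lia].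
  + case: (ltngtP k i) => h2; first lia.
      rewrite !Gt //; try lia.
      rewrite (_ : (k.+1 + (j - i)) = (k + (j - i)).+1); last lia.
      rewrite (_ : (k.+2 + (j - i)) = (k + (j - i)).+2); last lia.
      by apply: hok; lia.
    subst k; rewrite Le // !Gt //; try lia.
    rewrite he (_ : i.+1 + (j - i) = j.+1); last lia.
    rewrite (_ : i.+2 + (j - i) = j.+2); last lia.
    by apply: hok; lia.
  + rewrite Le; last lia. rewrite Le; last lia. rewrite Gt; last lia.
    rewrite (_ : k.+2 + (j - i) = j.+1); last lia.
    apply: cut_ok => //; try lia.
    by rewrite h.
Qed.

Lemma uniq_trail s : walk s Y -> uniq s -> exists p, active_trail E C X Y p.
Proof.
case=> s0 h0 hl hadj hok hu.
case: s => [|x p] // in s0 h0 hl hadj hok hu *.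
simpl in h0; subst x; exists p; split => //.
- by apply/(pathP X) => i hi; exact: (hadj i hi).
- rewrite -hl /=; case: p {hadj hok hu s0 hl} => //= y p.
  by rewrite (nth_last X (y :: p)).
- move=> i /andP[i0 ip] /=.
  have := hok i.-1 ltac:(simpl; lia).
  rewrite (_ : i.-1.+1 = i); last lia.
  rewrite /ok3; case: (collider E _ _ _) => //.
  by case/existsP => d /andP[h1 h2]; exists d.
Qed.

Lemma walk_trail_aux m s : size s <= m -> walk s Y -> exists p, active_trail E C X Y p.
Proof.
elim: m s => [|m IH] s hs ws.
  by case: ws => s0 _ _ _ _; lia.
case: (boolP (uniq s)) => hu; first exact: (uniq_trail ws hu).
case/(uniqPn X): hu => i [j [hij hj0 he]].
have hj : j < size s := hj0.
apply: (IH (take i.+1 s ++ drop j.+1 s)); last exact: cut_walk.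
rewrite size_cat size_take size_drop (_ : i.+1 < size s) /=; lia.
Qed.

Lemma no_walk : dsep E X Y C -> forall s, ~ walk s Y.
Proof.
move=> hd s ws; case: (walk_trail_aux (leqnn _) ws) => p; exact: hd.
Qed.


Lemma family (hnw : forall s, ~ walk s Y) i z j : inA i -> z \notin C ->
  (exists s, walk s z) -> (z == i) || E z i -> j \notin C -> (j == i) || E j i ->
  exists s, walk s j.
Proof.
move=> hA zC [s ws] hz jC hj.
have nY : forall P, P \/ (exists s', walk s' Y) -> P.
  by move=> P [//|[s' h]]; case: (hnw s' h).
case/orP: hz => [/eqP ez | ez]; case/orP: hj => [/eqP ej | ej].
- by subst; exists s.
- subst z; apply: nY; apply: (step_direct ws zC hA jC); by rewrite /adj ej orbT.
- subst j; apply: nY; apply: (step_direct ws zC (inA_par (connect1 ez) hA) jC).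
  by rewrite /adj ez.
- apply: nY; exact: (step_co ws zC jC ez ej hA).
Qed.

End Graph.
Section Sums.
Variables (R : realFieldType) (n : nat) (V : 'I_n -> finType).
Local Notation A := (assignment V).
Local Open Scope ring_scope.

Definition dep (T : 'I_n -> bool) (H : A -> R) :=
  forall v w : A, (forall j, T j -> v j = w j) -> H v = H w.

Definition mix (B : 'I_n -> bool) (v w : A) : A :=
  finfun (fun j => if B j then v j else w j).

Lemma mixE B v w j : mix B v w j = if B j then v j else w j.
Proof. by rewrite ffunE. Qed.

Lemma split_sum (B : 'I_n -> bool) (F G : A -> R) :
  dep B F -> dep (fun j => ~~ B j) G ->
  #|{: A}|%:R * (\sum_v F v * G v) = (\sum_v F v) * (\sum_v G v).
Proof.
move=> dF dG.
pose s (p : A * A) := (mix B p.1 p.2, mix B p.2 p.1).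
have sK : cancel s s.
  case=> v w; rewrite /s /=; congr pair; apply/ffunP => j; rewrite !mixE;
  by case: (B j).
have e : \sum_(p : A * A) F p.1 * G p.1 = \sum_(p : A * A) F (s p).1 * G (s p).1.
  exact: (reindex_inj (can_inj sK)).
have -> : (\sum_v F v) * (\sum_v G v) = \sum_v \sum_w F v * G w.
  by rewrite mulr_suml; apply: eq_bigr => v _; rewrite mulr_sumr.
rewrite pair_bigA /=.
transitivity (\sum_(p : A * A) F (s p).1 * G (s p).1); last first.
  apply: eq_bigr => -[v w] _ /=; congr (_ * _).
    by symmetry; apply: dF => j hj; rewrite mixE hj.
  by symmetry; apply: dG => j hj; rewrite mixE (negbTE hj).
rewrite -e -(pair_bigA _ (fun v w => F v * G v)) /=.
rewrite mulr_sumr; apply: eq_bigr => v _.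
by rewrite sumr_const mulr_natl.
Qed.


Definition upd (v : A) (i : 'I_n) (x : V i) : A := finfun (dfwith (fun j => v j) x).

Lemma upd_in v i (x : V i) : upd v x i = x.
Proof. by rewrite ffunE dfwith_in. Qed.

Lemma upd_out v i (x : V i) j : i != j -> upd v x j = v j.
Proof. by move=> h; rewrite ffunE dfwith_out. Qed.

Lemma updK v i : upd v (v i) = v.
Proof.
apply/ffunP => j; case: (eqVneq i j) => [<-|h]; first by rewrite upd_in.
by rewrite upd_out.
Qed.

Lemma upd_upd v i (x y : V i) : upd (upd v x) y = upd v y.
Proof.
apply/ffunP => j; case: (eqVneq i j) => [<-|h]; first by rewrite !upd_in.
by rewrite !upd_out.
Qed.

Lemma single_sum i (f K : A -> R) :
  (forall v, \sum_(x : V i) f (upd v x) = 1) -> (forall v (x : V i), K (upd v x) = K v) ->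
  #|V i|%:R * (\sum_v K v * f v) = \sum_v K v.
Proof.
move=> hf hK.
pose s (p : A * V i) := (upd p.1 p.2, p.1 i).
have sK : cancel s s.
  by case=> v x; rewrite /s /= upd_upd updK upd_in.
have e : \sum_(p : A * V i) K p.1 * f p.1 = \sum_(p : A * V i) K (s p).1 * f (s p).1.
  exact: (reindex_inj (can_inj sK)).
transitivity (\sum_v \sum_(x : V i) K (upd v x) * f (upd v x)); last first.
  apply: eq_bigr => v _; rewrite -[RHS]mulr1 -(hf v) mulr_sumr.
  by apply: eq_bigr => x _; rewrite hK.
rewrite (pair_bigA _ (fun v x => K (upd v x) * f (upd v x))) /=.
rewrite -[X in _ = X]/(\sum_(p : A * V i) K (s p).1 * f (s p).1) -e.
rewrite -(pair_bigA _ (fun v x => K v * f v)) /= mulr_sumr; apply: eq_bigr => v _.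
by rewrite sumr_const mulr_natl.
Qed.

End Sums.

Section Marg.
Variables (R : realFieldType) (n : nat) (V : 'I_n -> finType) (E : rel 'I_n).
Local Notation A := (assignment V).
Local Open Scope ring_scope.
Hypothesis acy : acyclic E.
Local Unset Implicit Arguments.
Variable cpt : forall i : 'I_n, A -> V i -> R.
Local Set Implicit Arguments.
Hypothesis sum1 : forall i v, \sum_(x : V i) cpt i v x = 1.
Hypothesis loc : forall i (v w : A), (forall j, E j i -> v j = w j) -> forall x, cpt i v x = cpt i w x.

Definition fac i (v : A) := cpt i v (v i).

Lemma sink (S : {set 'I_n}) : S != set0 -> exists2 i, i \in S & forall j, j \in S -> ~~ E i j.
Proof.
case/set0Pn => i0 i0S.
case: (@arg_minnP _ i0 (mem S) (fun i => #|[set j | connect E i j]|) i0S) => i iS hmin.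
exists i => // j jS; apply/negP => ij.
have := hmin j jS; apply/negP; rewrite -ltnNge; apply: proper_card; apply/properP; split.
  by apply/subsetP => l; rewrite !inE => /(connect_trans (connect1 ij)).
exists i; first by rewrite inE connect0.
by rewrite inE; exact: acy ij.
Qed.

Lemma fac_loc i (v w : A) : v i = w i -> (forall j, E j i -> v j = w j) -> fac i v = fac i w.
Proof. by move=> h1 h2; rewrite /fac h1; apply: loc. Qed.

Lemma marg m (D : {set 'I_n}) (H : A -> R) : #|D| = m -> dep (fun j => j \notin D) H ->
  (\prod_(i in D) #|V i|)%:R * (\sum_v H v * \prod_(i in D) fac i v) = \sum_v H v.
Proof.
elim: m D H => [|m IH] D H hD dH.
  move/eqP: hD; rewrite cards_eq0 => /eqP ->.
  by rewrite big_set0 mul1r; apply: eq_bigr => v _; rewrite big_set0 mulr1.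
have : D != set0 by rewrite -card_gt0 hD.
case/sink => i iD hi.
have hD' : #|D :\ i| = m by move: hD; rewrite (cardsD1 i) iD => -[].
have dH' : dep (fun j => j \notin D :\ i) H.
  move=> v w h; apply: dH => j jD; apply: h; by rewrite !inE negb_and jD orbT.
have hk := IH _ _ hD' dH'.
have ecard : \prod_(j in D) #|V j| = (#|V i| * \prod_(j in D :\ i) #|V j|)%N.
  by rewrite (bigD1 i) //=; congr (_ * _)%N; apply: eq_bigl => j; rewrite !inE andbC.
rewrite ecard natrM [_%:R * _%:R]mulrC -mulrA -hk; congr (_ * _).
have eprod : forall v, \prod_(j in D) fac j v = fac i v * \prod_(j in D :\ i) fac j v.
  move=> v; rewrite (bigD1 i) //=; congr (_ * _); apply: eq_bigl => j.
  by rewrite !inE andbC.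
under eq_bigr => v _ do rewrite eprod mulrCA mulrC.
apply: (single_sum (K := fun v => H v * \prod_(j in D :\ i) fac j v)).
- move=> v; rewrite -(sum1 i v); apply: eq_bigr => x _.
  rewrite /fac upd_in; apply: loc => j ji; rewrite upd_out //.
  by apply/eqP => e; move: ji; rewrite -e (negbTE (noloop acy i)).
- move=> v x /=; congr (_ * _).
    apply: dH => j jD; rewrite upd_out //; apply/eqP => e; move: jD; by rewrite -e iD.
  apply: eq_bigr => j; rewrite !inE => /andP[ji jD]; apply: fac_loc.
    by rewrite upd_out // eq_sym.
  move=> l lj; rewrite upd_out //; apply/eqP => e; move: lj; rewrite -e.
  by rewrite (negbTE (hi j jD)).
Qed.

End Marg.


Definition pb (P : Prop) : bool := if excluded_middle_informative P then true else false.
Lemma pbP (P : Prop) : reflect P (pb P).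
Proof. by rewrite /pb; case: excluded_middle_informative => h; constructor. Qed.

Section Core.
Variables (R : realFieldType) (n : nat) (V : 'I_n -> finType) (E : rel 'I_n).
Local Notation A := (assignment V).
Local Open Scope ring_scope.
Hypothesis acy : acyclic E.
Local Unset Implicit Arguments.
Variable cpt : forall i : 'I_n, A -> V i -> R.
Local Set Implicit Arguments.
Hypothesis ge0 : forall i v x, 0 <= cpt i v x.
Hypothesis sum1 : forall i v, \sum_(x : V i) cpt i v x = 1.
Hypothesis loc : forall i (v w : A), (forall j, E j i -> v j = w j) -> forall x, cpt i v x = cpt i w x.
Variables (X Y : 'I_n) (C : {set 'I_n}) (c : A).
Hypothesis hd : dsep E X Y C.

Local Notation fac := (fac cpt).

Definition vc (v : A) : A := finfun (fun j => if j \in C then c j else v j).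
Lemma vcE v j : vc v j = if j \in C then c j else v j.
Proof. by rewrite ffunE. Qed.

Lemma vc_id v : cond_event C c v -> vc v = v.
Proof.
move=> h; apply/ffunP => j; rewrite vcE; case: ifP => // jC.
by move/forallP: h => /(_ j); rewrite jC => /eqP.
Qed.

Definition Aset := [set i | inA E C X Y i].
Definition Zs := [set z | (z \notin C) && pb (exists s, walk E C X s z)].
Definition A1 := [set i in Aset | [exists z in Zs, (z == i) || E z i]].

Lemma XA : X \in Aset.
Proof. by rewrite inE; apply/existsP; exists X; rewrite eqxx connect0. Qed.
Lemma YA : Y \in Aset.
Proof. by rewrite inE; apply/existsP; exists Y; rewrite eqxx orbT connect0. Qed.
Lemma CA j : j \in C -> j \in Aset.
Proof. by move=> jC; rewrite inE; apply/existsP; exists j; rewrite jC orbT connect0. Qed.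
Lemma parA i j : E j i -> i \in Aset -> j \in Aset.
Proof. by move=> ji; rewrite !inE; apply: inA_par; exact: connect1. Qed.

Lemma ZC z : z \in Zs -> z \notin C.
Proof. by rewrite inE => /andP[]. Qed.
Lemma XZ : X \notin C -> X \in Zs.
Proof. by move=> h; rewrite inE h /=; apply/pbP; exists [:: X]; exact: walk1. Qed.
Lemma YZ : Y \notin Zs.
Proof.
rewrite inE negb_and; apply/orP; right; apply/pbP => -[s ws].
exact: (no_walk acy hd ws).
Qed.
Lemma FP i z j : i \in Aset -> z \in Zs -> (z == i) || E z i -> j \notin C ->
  (j == i) || E j i -> j \in Zs.
Proof.
rewrite !inE => hA /andP[zC /pbP hz] hzi jC hji; rewrite jC /=; apply/pbP.
apply: (family acy (no_walk acy hd) hA zC hz hzi jC hji).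
Qed.

Definition Fx x (v : A) := (vc v X == x)%:R * \prod_(i in A1) fac i (vc v).
Definition Gy y (v : A) := (cond_event C c v)%:R * ((vc v Y == y)%:R * \prod_(i in Aset :\: A1) fac i (vc v)).

Lemma Fx_ge0 x v : 0 <= Fx x v.
Proof. by rewrite /Fx mulr_ge0 ?ler0n // prodr_ge0 // => i _; exact: ge0. Qed.
Lemma Gy_ge0 y v : 0 <= Gy y v.
Proof. by rewrite /Gy !mulr_ge0 ?ler0n // prodr_ge0 // => i _; exact: ge0. Qed.


Lemma vc_agree (T : 'I_n -> bool) (v w : A) j : (forall j, T j -> v j = w j) ->
  (j \in C) || T j -> vc v j = vc w j.
Proof.
move=> h hj; rewrite !vcE; case: ifP => // jC; apply: h; by move: hj; rewrite jC.
Qed.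

Lemma dep_F x : dep (fun j => j \in Zs) (Fx x).
Proof.
move=> v w h; rewrite /Fx; congr (_ * _).
  rewrite (vc_agree h) //; case: (boolP (X \in C)) => //= XC; exact: XZ.
apply: eq_bigr => i; rewrite inE => /andP[iA /existsP[z /andP[zZ hz]]].
apply: (fac_loc loc).
  apply: (vc_agree h); case: (boolP (i \in C)) => //= iC; apply: (FP iA zZ hz iC); by rewrite eqxx.
move=> j ji; apply: (vc_agree h).
case: (boolP (j \in C)) => //= jC; apply: (FP iA zZ hz jC); by rewrite ji orbT.
Qed.

Lemma dep_G y : dep (fun j => j \notin Zs) (Gy y).
Proof.
move=> v w h; rewrite /Gy; congr (_ * (_ * _)).
- rewrite /cond_event; congr (nat_of_bool _)%:R; apply: eq_forallb => j.
  case: (boolP (j \in C)) => //= jC; rewrite h //.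
  by apply/negP => /ZC; rewrite jC.
- rewrite (vc_agree h) //; by rewrite YZ orbT.
apply: eq_bigr => i; rewrite !inE => /andP[niA1 iA].
have nZ : forall j, (j == i) || E j i -> j \notin C -> j \notin Zs.
  move=> j hj jC; apply/negP => jZ; move: niA1; rewrite iA /=.
  by move/negP; apply; apply/existsP; exists j; rewrite jZ.
apply: (fac_loc loc).
  apply: (vc_agree h); case: (boolP (i \in C)) => //= iC; apply: nZ iC; by rewrite eqxx.
move=> j ji; apply: (vc_agree h).
case: (boolP (j \in C)) => //= jC; apply: nZ jC; by rewrite ji orbT.
Qed.

Lemma core : exists (f : V X -> R) (g : V Y -> R),
  [/\ forall x, 0 <= f x, forall y, 0 <= g y &
    forall x y, \sum_(v : A | [&& v X == x, v Y == y & cond_event C c v]) \prod_(i < n) fac i v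
      = f x * g y].
Proof.
have Vne : forall i, (0 < #|V i|)%N by move=> i; apply/card_gt0P; exists (c i).
have NA : (0 < #|{: A}|)%N by apply/card_gt0P; exists c.
pose N := #|{: A}|.
have hmarg := marg acy sum1 loc.
have eprod : forall v, \prod_(i < n) fac i v =
    \prod_(i in Aset) fac i v * \prod_(i in ~: Aset) fac i v.
  move=> v; rewrite (bigID (mem Aset)) /=; congr (_ * _); apply: eq_bigl => i; by rewrite ?inE.
pose k := (\prod_(i in ~: Aset) #|V i|)%N.
have k0 : (0 < k)%N by apply: prodn_cond_gt0 => i _; exact: Vne.
have e1 : forall x y, k%:R * (\sum_(v : A | [&& v X == x, v Y == y & cond_event C c v]) \prod_(i < n) fac i v)
  = \sum_v Fx x v * Gy y v.
  move=> x y.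
  pose H (v : A) := ([&& v X == x, v Y == y & cond_event C c v])%:R * \prod_(i in Aset) fac i v.
  have dH : dep (fun j => j \notin ~: Aset) H.
    move=> v w h; have h' : forall j, j \in Aset -> v j = w j.
      by move=> j jA; apply: h; rewrite inE negbK.
    rewrite /H; congr (_ * _).
      rewrite (h' _ XA) (h' _ YA) /cond_event; congr (nat_of_bool _)%:R.
      congr [&& _, _ & _]; apply: eq_forallb => j.
      by case: (boolP (j \in C)) => //= jC; rewrite h' // CA.
    apply: eq_bigr => i iA; apply: (fac_loc loc); first exact: h'.
    by move=> j ji; apply: h'; exact: parA ji iA.
  have hk := hmarg _ _ _ (erefl _) dH.
  rewrite big_mkcond /=; transitivity (\sum_v H v); last first.
    apply: eq_bigr => v _; rewrite /H /Fx /Gy.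
    case cv: (cond_event C c v); last first.
      by rewrite !andbF !mul0r mulr0.
    rewrite vc_id // !andbT mul1r.
    rewrite (bigID (mem A1) (mem Aset)) /=.
    have -> : \prod_(i in Aset | i \in A1) fac i v = \prod_(i in A1) fac i v.
      apply: eq_bigl => i; apply: andb_idl; by rewrite /A1 in_set => /andP[].
    have -> : \prod_(i in Aset | i \notin A1) fac i v = \prod_(i in Aset :\: A1) fac i v.
      by apply: eq_bigl => i; rewrite in_setD andbC.
    by case: (v X == x); case: (v Y == y); rewrite /= ?mul0r ?mulr0 ?mul1r.
  rewrite -hk; congr (_ * _); apply: eq_bigr => v _.
  by rewrite eprod /H; case: ifP => _; rewrite /= ?mul1r ?mul0r.
pose f x := (\sum_v Fx x v) / (k * N)%:R.
pose g y := \sum_v Gy y v.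
exists f, g; split.
- by move=> x; rewrite /f divr_ge0 ?ler0n // sumr_ge0 // => v _; exact: Fx_ge0.
- by move=> y; rewrite /g sumr_ge0 // => v _; exact: Gy_ge0.
move=> x y.
have hs := split_sum (dep_F x) (dep_G y).
have nz : (k * N)%:R != 0 :> R by rewrite pnatr_eq0 -lt0n muln_gt0 k0 NA.
apply: (mulfI nz); rewrite /f mulrAC mulrCA divff // mulr1.
by rewrite natrM mulrAC e1 mulrC hs.
Qed.

End Core.
Unset Implicit Arguments.
Local Open Scope ring_scope.
Lemma nnrank_le (R : realFieldType) (A B : finType) (M : A -> B -> R) r :
  nn_factorization M r -> (nnrank M <= r)%N.
Proof.
move=> h.
have hex : exists r0, pb (nn_factorization M r0) by exists r; apply/pbP.
case: (ex_minnP hex) => r0 /pbP h0 hmin.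
have ex : exists r1, nn_factorization M r1 /\ forall r', nn_factorization M r' -> (r1 <= r')%N.
  by exists r0; split => // r' h'; apply: hmin; apply/pbP.
rewrite /nnrank; case: (epsilon_spec (inhabits 0%N) _ ex) => _ hm; exact: hm.
Qed.

Theorem lemma1 (R : realFieldType) (n k : nat) (E : rel 'I_n)
    (V : 'I_n -> finType) (P : assignment V -> R)
    (X Y : 'I_n) (C : {set 'I_n}) :
  acyclic E ->
  mixture_BN E k P ->
  dsep E X Y C ->
  forall c : assignment V, (nnrank (prob_matrix P X Y C c) <= k)%N.
Proof.
move=> acy [w [Pu [w0 w1 mk hP]]] hd c.
apply: nnrank_le.
have hc : forall u : 'I_k, exists fg : (V X -> R) * (V Y -> R),
   [/\ forall x, 0 <= fg.1 x, forall y, 0 <= fg.2 y &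
     forall x y, \sum_(v : assignment V | [&& v X == x, v Y == y & cond_event C c v]) Pu u v
       = fg.1 x * fg.2 y] /\ (forall v, 0 <= Pu u v).
  move=> u; case: (mk u) => cpt [ge0 s1 lc hPu].
  case: (core acy ge0 s1 lc c hd) => f [g [hf hg he]].
  exists (f, g); split; last first.
    by move=> v; rewrite hPu prodr_ge0 // => i _; exact: ge0.
  split => // x y; rewrite /= -he; apply: eq_bigr => v _; exact: hPu.
case/fin_all_exists: hc => fg hfg.
pose den := prob_event P (cond_event C c).
have Pge0 : forall v, 0 <= P v.
  by move=> v; rewrite hP sumr_ge0 // => u _; rewrite mulr_ge0 //; case: (hfg u).
have den0 : 0 <= den by rewrite /den /prob_event sumr_ge0.
exists (fun x u => w u * (fg u).1 x / den), (fun u y => (fg u).2 y); split.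
- move=> x u; rewrite divr_ge0 // mulr_ge0 //; by case: (hfg u) => -[].
- by move=> u y; case: (hfg u) => -[].
move=> x y; rewrite /prob_matrix -/den /prob_event.
under eq_bigr => v _ do rewrite hP.
rewrite exchange_big /= mulr_suml; apply: eq_bigr => u _.
case: (hfg u) => -[_ _ he] _.
by rewrite -mulr_sumr he mulrA mulrAC.
Qed.
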